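(* Let $a,q$ be positive integers with $q\ne1$ and $(a,q)=1$. Let $U=2^J\cdot3^3$ with $5\le J\ll1$ and $W=U\prod_{5\le p\le w}p$ with $10^{10^{10}}\le w\ll1$, and let $Wn+b$ be amenable. Let $V\ge1$ be an integer with $(q,V)=1$. Then $$\Bigg|\sum_{\substack{n\bmod q\\(WVn+b,q)=1\\(WVn+b-1,s(q))=1}}e\Big(\frac aqn\Big)\Bigg|\le\tau(q)\cdot1_{(q,W)=1}.$$
   Context: $e(t)=e^{2\pi it}$, $\tau$ is the divisor function. $s(n)=\prod_{p\mid n,\ p\equiv-1\ (4),\ p\ne3}p$. A linear polynomial $Kn+b$ ($K\ge1$) is amenable if (i) $6^3\mid K$; (ii) $(b,K)=(b-1,s(K))=1$; (iii) $b-1=2^j3^{2t}(4h+1)$ for some $h\in\mathbb{Z}$ with $3\nmid4h+1$ and $j,t\ge0$ with $2^{j+2}3^{2t+1}\mid K$. *)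

(* Defs.v *)
From HB Require Import structures.
From mathcomp Require Import all_boot all_order all_algebra.
From mathcomp Require Import reals trigo.
From mathcomp Require Import complex.
Set Implicit Arguments. Unset Strict Implicit. Unset Printing Implicit Defensive.
Import Order.TTheory GRing.Theory Num.Theory.
Local Open Scope ring_scope.
Local Open Scope complex_scope.

Definition e (R : realType) (t : R) : R[i] :=
  (cos (2 * pi * t)) +i* (sin (2 * pi * t)).

Definition tau (n : nat) : nat := size (divisors n).

Definition s (n : nat) : nat :=
  \prod_(p <- primes n | (p %% 4 == 3)%N && (p != 3%N)) p.

Definition amenable (K : nat) (b : int) : Prop :=
  [/\ (1 <= K)%N,
      (6 ^ 3 %| K)%N,
      coprimez b K%:Z /\ coprimez (b - 1) (s K)%:Z &
      exists (j t : nat) (h : int),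
        [/\ b - 1 = (2 ^ j * 3 ^ (2 * t))%:Z * (4 * h + 1),
            ~~ (3 %| 4 * h + 1)%Z &
            (2 ^ (j + 2) * 3 ^ (2 * t + 1) %| K)%N]].

Definition UU (J : nat) : nat := (2 ^ J * 3 ^ 3)%N.

Definition WW (J w : nat) : nat :=
  (UU J * \prod_(5 <= p < w.+1 | prime p) p)%N.

(* Main.v *)
Require Import Defs.
From HB Require Import structures.
From mathcomp Require Import all_boot all_order all_algebra.
From mathcomp Require Import reals trigo.
From mathcomp Require Import complex.
From mathcomp Require Import ring lra.
Set Implicit Arguments. Unset Strict Implicit.
Import Order.TTheory GRing.Theory Num.Theory.
Local Open Scope ring_scope.
Local Open Scope complex_scope.
Local Open Scope nat_scope.
Lemma coprime_primes_prod (p : nat) (l : seq nat) : prime p -> all prime l -> p \notin l ->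
  coprime p (\prod_(r <- l) r).
Proof.
move=> pp; elim: l => [|r l IH] /=; first by rewrite big_nil coprimen1.
case/andP=> pr al; rewrite in_cons negb_or => /andP[pnr pnl].
rewrite big_cons coprimeMr IH // andbT prime_coprime // dvdn_prime2 //.
Qed.

Lemma prod_primes_dvd (n : nat) (l : seq nat) : uniq l -> all prime l ->
  all (fun p => p %| n) l -> \prod_(r <- l) r %| n.
Proof.
elim: l => [|r l IH] /=; first by rewrite big_nil dvd1n.
case/andP=> rl ul /andP[pr al] /andP[rn ln].
rewrite big_cons Gauss_dvd ?rn ?IH //.
exact: coprime_primes_prod.
Qed.

Lemma prime_dvd_prod_primes (p : nat) (l : seq nat) : prime p -> all prime l ->
  (p %| \prod_(r <- l) r) = (p \in l).
Proof.
move=> pp; elim: l => [|r l IH] /=.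
  move=> _; rewrite big_nil dvdn1 in_nil; apply: negbTE; apply/eqP => p1; by move: pp; rewrite p1.
case/andP=> pr al; rewrite big_cons Euclid_dvdM // IH // dvdn_prime2 // in_cons.
Qed.

Lemma tau_ge (n : nat) : 0 < n -> 2 ^ size (primes n) <= size (divisors n).
Proof.
move=> n0; set ps := primes n; set k := size ps.
pose f (S : {set 'I_k}) := \prod_(r <- [seq nth 0 ps i | i : 'I_k <- enum S]) r.
have nthinj : injective (fun i : 'I_k => nth 0 ps i).
  move=> i j /eqP; rewrite nth_uniq ?primes_uniq ?ltn_ord // => /eqP; exact: val_inj.
have psprime : all prime ps by apply/allP => r; rewrite mem_primes => /andP[].
have lprime : forall S : {set 'I_k}, all prime [seq nth 0 ps i | i : 'I_k <- enum S].
  move=> S; apply/allP => r /mapP[i _ ->]; apply: (allP psprime); exact: mem_nth.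
have finj : injective f.
  move=> S T E; apply/setP => i.
  have pi : prime (nth 0 ps i) by apply: (allP psprime); exact: mem_nth.
  have H : forall U : {set 'I_k}, (i \in U) = (nth 0 ps i %| f U).
    by move=> U; rewrite /f prime_dvd_prod_primes // (mem_map nthinj) mem_enum.
  by rewrite !H E.
have -> : 2 ^ k = size [seq f U | U <- enum (powerset [set: 'I_k])].
  by rewrite size_map -cardE card_powerset cardsT card_ord.
apply: uniq_leq_size; first by rewrite (map_inj_uniq finj) enum_uniq.
move=> d /mapP[U _ ->]; rewrite -dvdn_divisors //.
apply: prod_primes_dvd => //.
  by rewrite (map_inj_uniq nthinj) enum_uniq.
apply/allP => r /mapP[i _ ->].
have : nth 0 ps i \in ps by exact: mem_nth.
by rewrite mem_primes => /and3P[].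
Qed.

Lemma coprime_all_primes (k n : nat) : 0 < n ->
  coprime k n = all (fun p => ~~ (p %| k)) (primes n).
Proof.
move=> n0; apply/idP/allP.
  move=> cop p; rewrite mem_primes => /and3P[pp _ pn]; apply/negP => pk.
  have : p %| gcdn k n by rewrite dvdn_gcd pk pn.
  by rewrite (eqP cop) dvdn1 => /eqP p1; move: pp; rewrite p1.
move=> H; apply/negPn/negP => ncop.
have g1 : 1 < gcdn k n.
  by rewrite ltn_neqAle eq_sym ncop gcdn_gt0 n0 orbT.
have pp := pdiv_prime g1.
have pg := pdiv_dvd (gcdn k n).
have pk : pdiv (gcdn k n) %| k by exact: dvdn_trans pg (dvdn_gcdl _ _).
have pn : pdiv (gcdn k n) %| n by exact: dvdn_trans pg (dvdn_gcdr _ _).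
have : pdiv (gcdn k n) \in primes n by rewrite mem_primes pp n0 pn.
by move/H; rewrite pk.
Qed.

Lemma coprime_prod_filter (k : nat) (l : seq nat) (P : pred nat) : all prime l ->
  coprime k (\prod_(p <- l | P p) p) = all (fun p => P p ==> ~~ (p %| k)) l.
Proof.
elim: l => [|r l IH] /=; first by rewrite big_nil coprimen1.
case/andP=> pr al; rewrite big_cons -IH //.
case: (P r) => //=.
by rewrite coprimeMr coprime_sym prime_coprime.
Qed.

Definition spec (p : nat) : bool := (p %% 4 == 3) && (p != 3).


Local Open Scope ring_scope.
Lemma char_cop (z : int) (q : nat) : (0 < q)%N ->
  (coprimez z q%:Z && coprimez (z - 1) (s q)%:Z) =
  all (fun p => ~~ (p%:Z %| z)%Z && ~~ (spec p && (p%:Z %| z - 1)%Z)) (primes q).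
Proof.
move=> q0.
have psprime : all prime (primes q) by apply/allP => r; rewrite mem_primes => /andP[].
rewrite !coprimezE !absz_nat (coprime_all_primes _ q0) /s (coprime_prod_filter _ _ psprime) -all_predI.
elim: (primes q) => //= p l ->; congr (_ && _).
by rewrite !dvdzE !absz_nat /spec implybE [X in _ = _ && X]negb_and.
Qed.

Section S.
Variable R : realType.
Lemma eD (x y : R) : e (x + y) = e x * e y.
Proof.
rewrite /e; set c := 2 * pi.
rewrite mulrDr cosD sinD; simpc.
by congr (_ +i* _); ring.
Qed.

Lemma e_nat (k : nat) : e (k%:R : R) = 1.
Proof.
rewrite /e; have -> : 2 * pi * (k%:R : R) = 0 + (pi *+ 2) *+ k.
  by rewrite add0r -mulr_natr -[pi *+ 2]mulr_natr; ring.
by rewrite (periodicn (@cosD2pi R)) (periodicn (@sinD2pi R)) cos0 sin0.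
Qed.

Lemma norm_e (t : R) : `|e t| = 1.
Proof.
by rewrite normc_def /= cos2Dsin2 sqrtr1.
Qed.

Lemma e_neq1 (r q : nat) : (0 < r)%N -> (r < q)%N -> e (r%:R / q%:R : R) != 1.
Proof.
move=> r0 rq.
have q0 : (0 : R) < q%:R by rewrite ltr0n (leq_ltn_trans _ rq).
set f := r%:R / q%:R : R.
have f0 : 0 < f by rewrite divr_gt0 // ltr0n.
have f1 : f < 1 by rewrite ltr_pdivrMr // mul1r ltr_nat.
have hs : 0 < sin (pi * f).
  apply: sin_gt0_pi; rewrite mulr_gt0 ?pi_gt0 //=.
  by rewrite -[X in _ < X]mulr1 ltr_pM2l ?pi_gt0.
apply/negP => /eqP E.
move: (congr1 (@complex.Re R) E).
rewrite /= (_ : 2 * pi * f = pi * f + pi * f); last by ring.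
rewrite cosD -!expr2 cos2sin2 => h.
have : 0 < sin (pi * f) * sin (pi * f) by rewrite mulr_gt0.
rewrite -expr2; lra.
Qed.

Lemma sum_rot (q : nat) (G : nat -> R[i]) : (forall n, G (n + q)%N = G n) ->
  forall k, \sum_(0 <= n < q) G (n + k)%N = \sum_(0 <= n < q) G n.
Proof.
move=> Gq; elim=> [|k IH]; first by apply: eq_bigr => n _; rewrite addn0.
rewrite -IH.
have E : \sum_(0 <= i < q.+1) G (i + k)%N = G (0 + k)%N + \sum_(0 <= i < q) G (i.+1 + k)%N.
  by rewrite big_nat_recl.
rewrite big_nat_recr //= add0n in E.
have E2 : \sum_(0 <= i < q) G (i + k.+1)%N = \sum_(0 <= i < q) G (i.+1 + k)%N.
  by apply: eq_bigr => i _; rewrite addSnnS.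
rewrite E2.
have E3 : G k = G (q + k)%N by rewrite addnC Gq.
move: E; rewrite E3 => E.
by apply: (addIr (G (q + k)%N)); rewrite E addrC.
Qed.

Lemma e_addnat (t : R) (k : nat) : e (t + k%:R) = e t.
Proof. by rewrite eD e_nat mulr1. Qed.

Lemma e_ne1_frac (a q D : nat) : coprime a q -> (0 < D)%N -> (D < q)%N ->
  e ((a * D)%:R / q%:R : R) != 1.
Proof.
move=> aq D0 Dq.
have q0 : (0 < q)%N by apply: leq_ltn_trans Dq.
have qR : (q%:R : R) != 0 by rewrite pnatr_eq0 -lt0n.
rewrite {1}(divn_eq (a * D) q) natrD mulrDl natrM mulfK // addrC e_addnat.
apply: e_neq1; last by rewrite ltn_mod.
rewrite lt0n; apply/negP => /eqP H.
have : (q %| a * D)%N by rewrite /dvdn H.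
have qa : coprime q a by rewrite coprime_sym.
rewrite (Gauss_dvdr _ qa).
by move=> /(dvdn_leq D0) h; move: (leq_trans Dq h); rewrite ltnn.
Qed.

Lemma periodic_mul (D : nat) (T : Type) (h : nat -> T) : (forall n, h (n + D)%N = h n) ->
  forall k n, h (n + k * D)%N = h n.
Proof.
move=> hD; elim=> [|k IH] n; first by rewrite mul0n addn0.
by rewrite mulSn addnA IH hD.
Qed.

Lemma shift_zero (a q D : nat) (h : nat -> R[i]) : coprime a q ->
  (0 < D)%N -> (D < q)%N -> (D %| q)%N -> (forall n, h (n + D)%N = h n) ->
  \sum_(0 <= n < q) e ((a * n)%:R / q%:R) * h n = 0.
Proof.
move=> aq D0 Dq Dvq hD.
have q0 : (0 < q)%N by apply: leq_ltn_trans Dq.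
have qR : (q%:R : R) != 0 by rewrite pnatr_eq0 -lt0n.
set G := fun n => e ((a * n)%:R / q%:R) * h n.
have Gq : forall n, G (n + q)%N = G n.
  move=> n; rewrite /G.
  have -> : h (n + q)%N = h n.
    by rewrite -(divnK Dvq) (@periodic_mul D _ h hD).
  by rewrite mulnDr natrD mulrDl [(a * q)%:R]natrM mulfK // e_addnat.
have := sum_rot Gq D.
have -> : \sum_(0 <= n < q) G (n + D)%N = e ((a * D)%:R / q%:R) * \sum_(0 <= n < q) G n.
  rewrite mulr_sumr; apply: eq_bigr => n _; rewrite /G hD.
  by rewrite mulnDr natrD mulrDl eD mulrA [e (_ / _) * e _]mulrC.
move=> E.
have : (1 - e ((a * D)%:R / q%:R)) * \sum_(0 <= n < q) G n = 0.
  by rewrite mulrBl mul1r E subrr.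
move/eqP; rewrite mulf_eq0 subr_eq0 eq_sym (negbTE (e_ne1_frac aq D0 Dq)) /=.
by move/eqP.
Qed.

Section G.
Variables (a q m : nat) (b : int).
Hypotheses (aq : coprime a q) (qm : coprime q m) (q0 : (0 < q)%N).

Definition xx (n : nat) : int := (m * n)%:Z + b.
Definition gb (p n : nat) : bool :=
  ~~ (p%:Z %| xx n)%Z && ~~ (spec p && (p%:Z %| xx n - 1)%Z).
Definition good (D : nat) (h : nat -> bool) :=
  (forall n, h (n + D)%N = h n) /\ (forall n1 n2, h n1 -> h n2 -> n1 = n2 %[mod D]).

Lemma good_step D h p c : prime p -> (p %| q)%N -> coprime D p -> good D h ->
  good (D * p) (fun n => h n && (p%:Z %| xx n - c)%Z).
Proof.
move=> pp pq Dp [hD hc]; split.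
  move=> n; rewrite [(D * p)%N]mulnC (periodic_mul hD); congr (_ && _).
  have -> : xx (n + p * D) - c = (xx n - c) + (m * (p * D))%:Z.
    by rewrite /xx mulnDr PoszD; ring.
  by rewrite rpredDr // PoszM dvdz_mull // PoszM dvdz_mulr.
move=> n1 n2 /andP[h1 d1] /andP[h2 d2].
apply/eqP; rewrite chinese_remainder //; apply/andP; split.
  by apply/eqP; exact: hc.
have pm : coprimez p m.
  by rewrite coprimezE !absz_nat; apply: coprime_dvdl pq qm.
have : (p%:Z %| (xx n1 - c) - (xx n2 - c))%Z by rewrite rpredB.
have -> : (xx n1 - c) - (xx n2 - c) = m%:Z * (n1%:Z - n2%:Z).
  by rewrite /xx !PoszM; ring.
rewrite Gauss_dvdzr // -eqz_mod_dvd !modz_nat eqz_nat.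
by [].
Qed.

Lemma decomp (h : nat -> bool) p n : prime p ->
  ((h n)%:R * (gb p n)%:R : R[i]) =
  (h n)%:R - (h n && (p%:Z %| xx n - 0)%Z)%:R
  - (spec p)%:R * (h n && (p%:Z %| xx n - 1)%Z)%:R.
Proof.
move=> pp.
have nb : ~~ ((p%:Z %| xx n)%Z && (p%:Z %| xx n - 1)%Z).
  apply/negP => /andP[d1 d2].
  have : (p%:Z %| xx n - (xx n - 1))%Z by rewrite rpredB.
  rewrite opprB addrC subrK dvdz1 absz_nat => /eqP p1.
  by move: pp; rewrite p1.
rewrite subr0 /gb; move: nb.
by case: (h n); case: (p%:Z %| xx n)%Z; case: (p%:Z %| xx n - 1)%Z; case: (spec p) => //= _; ring.
Qed.

Lemma LG (L : seq nat) : forall (D : nat) (h : nat -> bool),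
  uniq L -> all prime L -> all (fun p => p %| q)%N L ->
  (D * \prod_(p <- L) p %| q)%N -> coprime D (\prod_(p <- L) p) -> (0 < D)%N -> good D h ->
  `| \sum_(0 <= n < q) e ((a * n)%:R / q%:R) * ((h n)%:R * \prod_(p <- L) (gb p n)%:R : R[i]) |
  <= (((D * \prod_(p <- L) p)%N == q) * 2 ^ size L)%:R.
Proof.
elim: L => [|p L IH] D h.
  move=> _ _ _; rewrite big_nil muln1 => Dq cD D0 [hD hc].
  under eq_bigr => n _ do rewrite big_nil mulr1.
  case: eqP => [DqE | DneQ].
    subst D; rewrite mul1n expn0.
    apply: le_trans (ler_norm_sum _ _ _) _.
    rewrite (eq_bigr (fun n => ((h n : nat))%:R)); last first.
      by move=> n _; rewrite normrM norm_e mul1r normr_nat.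
    rewrite -natr_sum ler_nat big_mkord.
    case: (pickP (fun i : 'I_q => h i)) => [i0 hi0 | none]; last first.
      by rewrite big1 // => i _; rewrite none.
    rewrite (bigD1 i0) //= hi0 big1 ?addn0 // => j ji0.
    apply/eqP; rewrite eqb0; apply/negP => hj; move/negP: ji0; apply; apply/eqP/val_inj => /=.
    by have := hc _ _ hj hi0; rewrite !modn_small.
  rewrite mul0n.
  have Dlt : (D < q)%N by rewrite ltn_neqAle (dvdn_leq q0 Dq) andbT; apply/eqP.
  rewrite (@shift_zero a q D (fun n => (h n)%:R) aq D0 Dlt Dq); first by rewrite normr0.
  by move=> n; rewrite hD.
move=> /= /andP[pL uL] /andP[pp aL] /andP[pq aLq]; rewrite big_cons => Dq cD D0 gh.
have cD1 : coprime D p by move: cD; rewrite coprimeMr => /andP[].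
have cD2 : coprime D (\prod_(r <- L) r) by move: cD; rewrite coprimeMr => /andP[].
have cpL : coprime p (\prod_(r <- L) r) by exact: coprime_primes_prod.
have p1 : (1 < p)%N by exact: prime_gt1.
set P := fun n => \prod_(r <- L) (gb r n)%:R : R[i].
set E := fun n => e ((a * n)%:R / q%:R) : R[i].
set h1 := fun n => h n && (p%:Z %| xx n - 0)%Z.
set h2 := fun n => h n && (p%:Z %| xx n - 1)%Z.
have -> : \sum_(0 <= n < q) E n * ((h n)%:R * \prod_(r <- p :: L) (gb r n)%:R) =
  \sum_(0 <= n < q) E n * ((h n)%:R * P n) - \sum_(0 <= n < q) E n * ((h1 n)%:R * P n)
  - (spec p)%:R * \sum_(0 <= n < q) E n * ((h2 n)%:R * P n).
  rewrite mulr_sumr -!sumrB; apply: eq_bigr => n _.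
  by rewrite big_cons [(h n)%:R * _]mulrA (decomp h n pp) /h1 /h2 /P; ring.
have B0 := IH D h uL aL aLq (dvdn_trans (dvdn_mul (dvdnn D) (dvdn_mull p (dvdnn _))) Dq) cD2 D0 gh.
have DLq : ((D * \prod_(r <- L) r)%N == q) = false.
  apply: negbTE; apply/eqP => E'; move: Dq; rewrite mulnCA E' => /(dvdn_leq q0).
  by rewrite -[X in (_ <= X)%N]mul1n leq_pmul2r // leqNgt p1.
rewrite DLq mul0n in B0.
have Dq' : ((D * p) * \prod_(r <- L) r %| q)%N by rewrite -mulnA.
have cD' : coprime (D * p) (\prod_(r <- L) r) by rewrite coprimeMl cD2 cpL.
have Dp0 : (0 < D * p)%N by rewrite muln_gt0 D0 prime_gt0.
have B1 := IH (D * p)%N h1 uL aL aLq Dq' cD' Dp0 (good_step 0 pp pq cD1 gh).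
have B2 := IH (D * p)%N h2 uL aL aLq Dq' cD' Dp0 (good_step 1 pp pq cD1 gh).
set B := (((D * p * \prod_(r <- L) r)%N == q) * 2 ^ size L)%N.
have -> : (((D * (p * \prod_(r <- L) r))%N == q) * 2 ^ (size L).+1)%:R = 0 + B%:R + B%:R :> R[i].
  by rewrite add0r -natrD mulnA expnS /B; congr _%:R; case: (_ == _); rewrite ?mul0n ?mul1n // addnn mul2n.
apply: le_trans (ler_normB _ _) _; apply: lerD.
  by apply: le_trans (ler_normB _ _) _; apply: lerD.
rewrite normrM normr_nat; case: (spec p); rewrite ?mul1r ?mul0r //.
Qed.
End G.
End S.

Lemma all_prod (R : realType) (f : nat -> bool) (l : seq nat) :
  ((all f l)%:R : R[i]) = \prod_(p <- l) (f p)%:R.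
Proof.
elim: l => [|r l IH] /=; first by rewrite big_nil.
by rewrite big_cons -IH -natrM mulnb.
Qed.

Unset Implicit Arguments.

Theorem lemma5 (R : realType) (a q J w V : nat) (b : int) :
  (0 < a)%N -> (0 < q)%N -> q != 1%N -> coprime a q ->
  (5 <= J)%N -> (10 ^ (10 ^ 10) <= w)%N ->
  amenable (WW J w) b ->
  (1 <= V)%N -> coprime q V ->
  `| \sum_(n < q | coprimez ((WW J w * V * n)%:Z + b) q%:Z
                   && coprimez ((WW J w * V * n)%:Z + b - 1) (s q)%:Z)
        e ((a * n)%:R / q%:R : R) |
  <= ((tau q)%:R * (coprime q (WW J w))%:R : R[i]).
Proof.
move=> a0 q0 q1 aq J5 _ am V1 qV.
set W := WW J w.
set m := (W * V)%N.
have -> : \sum_(n < q | coprimez ((W * V * n)%:Z + b) q%:Z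
                   && coprimez ((W * V * n)%:Z + b - 1) (s q)%:Z)
        e ((a * n)%:R / q%:R : R) =
  \sum_(0 <= n < q) e ((a * n)%:R / q%:R) *
     (((fun _ => true) n)%:R * \prod_(p <- primes q) (gb m b p n)%:R : R[i]).
  rewrite big_mkcond /= big_mkord; apply: eq_bigr => n _.
  rewrite (char_cop _ q0) mul1r -all_prod.
  by case: (all _ _); rewrite ?mulr1 ?mulr0.
have psprime : all prime (primes q) by apply/allP => r; rewrite mem_primes => /andP[].
have psdvd : all (fun p => p %| q)%N (primes q).
  by apply/allP => r; rewrite mem_primes => /and3P[].
case cWq : (coprime q W).
  have qm : coprime q m by rewrite /m coprimeMr cWq qV.
  have gd : good 1 (fun _ => true) by split => // n1 n2 _ _; rewrite !modn1.
  have pd : (1 * \prod_(p <- primes q) p %| q)%N.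
    by rewrite mul1n; apply: prod_primes_dvd => //; exact: primes_uniq.
  have := @LG R a q m b aq qm q0 (primes q) 1 (fun _ => true) (primes_uniq q) psprime psdvd pd (coprime1n _) (ltn0Sn 0) gd.
  move/le_trans; apply.
  rewrite mulr1 ler_nat /tau mul1n; case: (_ == _); rewrite ?mul0n ?mul1n //.
  exact: tau_ge.
rewrite mulr0.
have g1 : (1 < gcdn q W)%N.
  have nc : gcdn q W != 1%N by move: cWq; rewrite /coprime => /negbT.
  by rewrite ltn_neqAle eq_sym nc gcdn_gt0 q0.
have pp := pdiv_prime g1.
set p := pdiv (gcdn q W) in pp *.
have pg : (p %| gcdn q W)%N by exact: pdiv_dvd.
have pq : (p %| q)%N by exact: dvdn_trans pg (dvdn_gcdl _ _).
have pW : (p %| W)%N by exact: dvdn_trans pg (dvdn_gcdr _ _).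
set D := (q %/ p)%N.
have qD : (D * p)%N = q by rewrite /D divnK.
have D0 : (0 < D)%N.
  by rewrite lt0n; apply/eqP => D0; move: q0; rewrite -qD D0.
have Dlt : (D < q)%N by rewrite /D ltn_Pdiv // prime_gt1.
have Dq : (D %| q)%N by rewrite -qD dvdn_mulr.
have qmD : (q %| m * D)%N.
  have pm : (p %| m)%N by rewrite /m dvdn_mulr.
  by rewrite -{1}qD [X in (_ %| X)%N]mulnC dvdn_mul.
rewrite (shift_zero aq D0 Dlt Dq); first by rewrite normr0.
move=> n /=; congr (_ * _); rewrite !big_seq; apply: eq_bigr => r rq.
have rq' : (r %| q)%N by move: rq; rewrite mem_primes => /and3P[].
have rd : (r%:Z %| (m * D)%:Z)%Z by rewrite dvdzE !absz_nat (dvdn_trans rq' qmD).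
rewrite /gb /xx mulnDr PoszD.
have E1 : ((m * n)%N%:Z + (m * D)%N%:Z + b = ((m * n)%N%:Z + b) + (m * D)%N%:Z)%R.
  by rewrite addrAC.
by rewrite E1 [(_ + (m * D)%N%:Z - 1)%R]addrAC !(rpredDr _ rd).
Qed.
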